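(* Let $G=C_{2n}(a,n)$ with $a\in\{1,2\}$ be a connected cubic circulant graph. Then the induced matching number of $G$ is $\operatorname{im}(G)=\lfloor n/2\rfloor$.
   Context: For integers $1\le a<n$, $C_{2n}(a,n)$ is the simple graph on vertex set $[2n]$ in which distinct vertices $i,j$ are adjacent iff $|i-j|\in\{a,n,2n-a\}$. A matching $M$ of a graph $G$ is a set of pairwise disjoint edges; it is induced if the edges of $M$ are exactly the edges of the induced subgraph of $G$ on the vertices covered by $M$. $\operatorname{im}(G)$ is the maximum size of an induced matching of $G$. *)

(* Defs.v *)
From mathcomp Require Import all_boot.
Set Implicit Arguments. Unset Strict Implicit. Unset Printing Implicit Defensive.

Section Graph.
Variables (T : finType) (e : rel T).

Definition is_edge (E : {set T}) : bool :=
  [exists x, exists y, e x y && (E == [set x; y])].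

Definition matching (M : {set {set T}}) : bool :=
  [forall E in M, is_edge E] && trivIset M.

Definition induced_matching (M : {set {set T}}) : bool :=
  matching M &&
  [forall x in cover M, forall y in cover M, e x y ==> ([set x; y] \in M)].

Definition im : nat := \max_(M : {set {set T}} | induced_matching M) #|M|.

Definition cubic : Prop := forall x : T, #|[set y | e x y]| = 3.

Definition connected : Prop := forall x y : T, connect e x y.
End Graph.

Definition absd (i j : nat) : nat := (i - j) + (j - i).

(* C_{2n}(a,n) on vertex set 'I_(2n) = {0,...,2n-1} (shifted copy of [2n]) *)
Definition circ_adj (n a : nat) : rel 'I_(2 * n) :=
  fun i j => (i != j) &&
    [|| absd i j == a, absd i j == n | absd i j == 2 * n - a].
Arguments circ_adj : clear implicits.

(* Main.v *)
Require Import Defs.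
From mathcomp Require Import all_boot zify.

Lemma adjE n a (x y : 'I_(2*n)) : circ_adj n a x y =
  (nat_of_ord x != nat_of_ord y) && [|| absd x y == a, absd x y == n | absd x y == 2 * n - a].
Proof. by []. Qed.

Definition rho n v := if v < n then v else v - n.
Definition nxt n a r := if r + a < n then r + a else r + a - n.
Definition phiv n a (C : {set 'I_(2*n)}) (v : 'I_(2*n)) : nat :=
  if (n <= v) && [exists y in C, val y == v - n] then nxt n a (rho n v) else rho n v.

Ltac splitifs := repeat match goal with |- context [if ?b then _ else _] => case: (boolP b) => ? end.

Section Inj.
Variables (n a : nat) (C : {set 'I_(2*n)}).
Variable ha : 0 < a < n.
Variable HQ : forall x y z, x \in C -> y \in C -> z \in C -> circ_adj n a x y -> circ_adj n a x z -> y = z.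

Lemma caseB (v w y : 'I_(2*n)) : v \in C -> w \in C -> y \in C -> n <= v ->
  nat_of_ord y = v - n -> nxt n a (rho n v) = rho n w -> False.
Proof.
move=> vC wC yC hv hy E.
have vl := ltn_ord v; have wl := ltn_ord w.
have Ew : nat_of_ord w <> v - n by move: E; rewrite /rho; splitifs; rewrite /nxt; splitifs; lia.
have Ev : nat_of_ord w <> v by move: E; rewrite /rho; splitifs; rewrite /nxt; splitifs; lia.
have hvy : circ_adj n a v y by rewrite adjE /absd; lia.
have [H1|H1] : circ_adj n a v w \/ circ_adj n a y w.
  have : (nat_of_ord w = v + a \/ v + a = w + 2 * n) \/ nat_of_ord w = y + a.
    by move: E; rewrite /rho; splitifs; rewrite /nxt; splitifs; lia.
  by case=> [H|H]; [left|right]; rewrite adjE /absd; lia.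
  by move: (HQ _ _ _ vC yC wC hvy H1) => /(congr1 (@nat_of_ord _)); lia.
have hyv : circ_adj n a y v by move: hvy; rewrite !adjE /absd; lia.
by move: (HQ _ _ _ yC vC wC hyv H1) => /(congr1 (@nat_of_ord _)); lia.
Qed.

Lemma phiv_inj : {in C &, injective (phiv n a C)}.
Proof.
move=> v w vC wC; rewrite /phiv.
have vl := ltn_ord v; have wl := ltn_ord w.
case: (boolP ((n <= v) && [exists y in C, val y == v - n])) =>
   [/andP[hv /exists_inP[y yC /eqP /= hy]] | hv];
case: (boolP ((n <= w) && [exists y in C, val y == w - n])) =>
   [/andP[hw /exists_inP[y' yC' /eqP /= hy']] | hw].
- move=> E; apply: ord_inj; move: E; rewrite /rho; splitifs; rewrite /nxt; splitifs; lia.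
- move=> E; case: (caseB _ _ _ vC wC yC hv hy E).
- move=> E; case: (caseB _ _ _ wC vC yC' hw hy' (esym E)).
- move=> E.
  have : (nat_of_ord v = w) \/ (nat_of_ord v = w + n) \/ (nat_of_ord w = v + n).
    by move: E; rewrite /rho; splitifs; lia.
  case=> [?|[?|?]]; first by apply: ord_inj.
    exfalso; move/negP: hv; apply; apply/andP; split; [lia|].
    by apply/exists_inP; exists w => //=; apply/eqP; lia.
  exfalso; move/negP: hw; apply; apply/andP; split; [lia|].
  by apply/exists_inP; exists v => //=; apply/eqP; lia.
Qed.
End Inj.

Lemma upper n a (C : {set 'I_(2*n)}) : 0 < a < n ->
  (forall x y z, x \in C -> y \in C -> z \in C -> circ_adj n a x y -> circ_adj n a x z -> y = z) ->
  #|C| <= n.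
Proof.
move=> ha HQ.
have inj := @phiv_inj n a C ha HQ.
rewrite cardE -(size_map (phiv n a C)) -[X in _ <= X](size_iota 0 n).
apply: uniq_leq_size.
  rewrite map_inj_in_uniq ?enum_uniq // => x y; rewrite !mem_enum; exact: inj.
move=> _ /mapP [v _ ->]; rewrite mem_iota /= add0n.
have vl := ltn_ord v.
rewrite /phiv /rho; splitifs; rewrite /nxt; splitifs; lia.
Qed.

Lemma lower n a m (f : nat -> nat) : 0 < a < n ->
 (forall i, i < m -> f i < n) ->
 (forall i j, i < m -> j < m -> f i = f j -> i = j) ->
 (forall i j, i < m -> j < m -> (f i + a != f j) && (f i + a != f j + n)) ->
 m <= im (circ_adj n a).
Proof.
move=> ha Hf Hinj Hd.
pose R := fun (k : 'I_m) => [set x : 'I_(2*n) | (nat_of_ord x == f k) || (nat_of_ord x == f k + n)].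
have inR : forall k (x : 'I_(2*n)), (x \in R k) = (nat_of_ord x == f k) || (nat_of_ord x == f k + n).
  by move=> k x; rewrite inE.
pose M := [set R k | k : 'I_m].
have Rinj : injective R.
  move=> k k' E.
  have hk := Hf k (ltn_ord k).
  have hx : f k < 2 * n by lia.
  have : Ordinal hx \in R k by rewrite inR /= eqxx.
  rewrite E inR /= => H. apply: ord_inj; apply: Hinj => //.
  have hk' := Hf k' (ltn_ord k'). lia.
have cardM : #|M| = m by rewrite card_imset // card_ord.
rewrite -cardM /im; apply: leq_bigmax_cond.
have coverP : forall x, x \in cover M -> exists k : 'I_m, x \in R k.
  move=> x /bigcupP [E /imsetP [k _ ->] hx]; by exists k.
apply/andP; split; first (apply/andP; split).
- apply/forall_inP => E /imsetP [k _ ->].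
  have hk := Hf k (ltn_ord k).
  have hx0 : f k < 2 * n by lia.
  have hx1 : f k + n < 2 * n by lia.
  apply/existsP; exists (Ordinal hx0); apply/existsP; exists (Ordinal hx1).
  apply/andP; split; first by rewrite adjE /absd /=; lia.
  apply/eqP/setP => z; rewrite inR !inE -!val_eqE /=.
  by [].
- apply/trivIsetP => A B /imsetP [k _ ->] /imsetP [k' _ ->] neq.
  have kk : k != k' by apply: contraNneq neq => ->.
  have hk := Hf k (ltn_ord k); have hk' := Hf k' (ltn_ord k').
  have fk : f k != f k'.
    apply: contraNneq kk => /Hinj E; apply/eqP/ord_inj; exact: E.
  rewrite -setI_eq0; apply/eqP/setP => z; rewrite !inE.
  apply/negbTE/negP => /andP []; lia.
- apply/forall_inP => x /coverP [k hxk]; apply/forall_inP => y /coverP [k' hyk].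
  apply/implyP => hxy.
  have hk := Hf k (ltn_ord k); have hk' := Hf k' (ltn_ord k').
  have d1 := Hd k k' (ltn_ord k) (ltn_ord k'); have d2 := Hd k' k (ltn_ord k') (ltn_ord k).
  move: hxk hyk; rewrite !inR => hxk hyk.
  have E : f k = f k' by move: hxy; rewrite adjE /absd; lia.
  have kk : k = k' by apply: ord_inj; apply: Hinj.
  subst k'.
  apply/imsetP; exists k => //.
  apply/setP => z; rewrite inR !inE -!val_eqE /=.
  move: hxy; rewrite adjE /absd => hxy.
  apply/idP/idP; lia.
Qed.

Theorem lemma2p2 (n a : nat) :
  1 <= a -> a < n -> (a == 1) || (a == 2) ->
  cubic (circ_adj n a) -> connected (circ_adj n a) ->
  im (circ_adj n a) = n %/ 2.
Proof.
move=> ha1 han hab _ Hconn.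
have ha : 0 < a < n by apply/andP; split.
apply/eqP; rewrite eqn_leq; apply/andP; split.
- rewrite /im; apply/bigmax_leqP => M HM; rewrite leq_divRL //.
  move: HM => /andP [/andP [Hedges Htriv] Hind].
  have Hc : #|cover M| = #|M| * 2.
    rewrite -(eqP Htriv) -sum_nat_const; apply: eq_bigr => E hE.
    move: (forall_inP Hedges E hE) => /existsP [x /existsP [y /andP [hxy /eqP ->]]].
    by rewrite cards2; move: hxy => /andP [-> _].
  rewrite -Hc; apply: (@upper n a (cover M) ha).
  move=> x y z hx hy hz hxy hxz.
  have Hind' : forall u v, u \in cover M -> v \in cover M -> circ_adj n a u v -> [set u; v] \in M.
    move=> u v hu hv huv.
    by move/forall_inP/(_ u hu)/forall_inP/(_ v hv)/implyP/(_ huv): Hind.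
  have m1 := Hind' x y hx hy hxy; have m2 := Hind' x z hx hz hxz.
  have e12 : [set x; y] = [set x; z].
    apply/eqP; apply: contraT => neq.
    move: (trivIsetP Htriv _ _ m1 m2 neq) => /disjoint_setI0/setP/(_ x).
    by rewrite !inE eqxx.
  have : z \in [set x; y] by rewrite e12 !inE eqxx orbT.
  rewrite !inE => /orP [/eqP zx | /eqP ->] //.
  by move: hxz; rewrite zx /circ_adj eqxx.
- case/orP: hab => /eqP ?; subst a.
  + apply: (@lower n 1 (n %/ 2) (fun k => 2 * k)) => //; intros; try lia.
  + have nodd : odd n.
      apply: contraT => hev.
      have h0 : 0 < 2 * n by lia.
      have h1 : 1 < 2 * n by lia.
      have cl : closed (circ_adj n 2) [pred x : 'I_(2*n) | odd x].
        move=> x y; rewrite adjE /absd /= => hxy. rewrite !inE /=. lia.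
      by have := closed_connect cl (Hconn (Ordinal h0) (Ordinal h1)).
    apply: (@lower n 2 (n %/ 2) (fun k => k + 2 * (k %/ 2))) => //; intros; lia.
Qed.
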